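(* Let $X$ be a Hilbert space with unit sphere $S_X$, let $C\subseteq X$ be a subset, and let $N:C\to S_X$ be a mapping. Then the following statements are equivalent. (1) There exists a $C^{1,1}$ convex body $V\subseteq X$ such that $C\subseteq \partial V$ and $N(x)$ is the outer unit normal to $\partial V$ at $x$ for every $x\in C$. (2) There exists some $r>0$ such that $$\langle N(y), y-x\rangle \geq \tfrac{r}{2}\|N(y)-N(x)\|^2 \quad\text{for all } x,y\in C.$$ Moreover, if (2) holds with a constant $r>0$, then the body $V$ in (1) can be chosen so that its outer unit normal $N_{\partial V}:\partial V\to S_X$ is $r^{-1}$-Lipschitz. In addition, if $C$ is bounded, then $V$ can be taken to be bounded as well.
   Context: A convex body in $X$ is a closed convex set with nonempty interior; convex bodies are allowed to be unbounded. A convex body $V$ is of class $C^{1,1}$ if $\partial V$ is a $C^1$ submanifold (so that the outer unit normal $N_{\partial V}:\partial V\to S_X$ is well defined and continuous) and $N_{\partial V}$ is Lipschitz with respect to the ambient norm, i.e. there is $L>0$ with $\|N_{\partial V}(x)-N_{\partial V}(y)\|\le L\|x-y\|$ for all $x,y\in\partial V$. *)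

(* Defs.v *)
From Stdlib Require Import Reals.
Open Scope R_scope.

Record Hilbert := {
  hcar :> Type;
  hadd : hcar -> hcar -> hcar;
  hzero : hcar;
  hopp : hcar -> hcar;
  hscal : R -> hcar -> hcar;
  hinner : hcar -> hcar -> R;
  hadd_assoc : forall x y z, hadd x (hadd y z) = hadd (hadd x y) z;
  hadd_comm : forall x y, hadd x y = hadd y x;
  hadd_0 : forall x, hadd x hzero = x;
  hadd_opp : forall x, hadd x (hopp x) = hzero;
  hscal_assoc : forall a b x, hscal a (hscal b x) = hscal (a * b) x;
  hscal_1 : forall x, hscal 1 x = x;
  hscal_distr_l : forall a x y, hscal a (hadd x y) = hadd (hscal a x) (hscal a y);
  hscal_distr_r : forall a b x, hscal (a + b) x = hadd (hscal a x) (hscal b x);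
  hinner_sym : forall x y, hinner x y = hinner y x;
  hinner_add_l : forall x y z, hinner (hadd x y) z = hinner x z + hinner y z;
  hinner_scal_l : forall a x y, hinner (hscal a x) y = a * hinner x y;
  hinner_pos : forall x, 0 <= hinner x x;
  hinner_def : forall x, hinner x x = 0 -> x = hzero;
  hcomplete : forall u : nat -> hcar,
    (forall eps, 0 < eps -> exists N, forall m n, (N <= m)%nat -> (N <= n)%nat ->
        sqrt (hinner (hadd (u m) (hopp (u n))) (hadd (u m) (hopp (u n)))) < eps) ->
    exists l, forall eps, 0 < eps -> exists N, forall n, (N <= n)%nat ->
        sqrt (hinner (hadd (u n) (hopp l)) (hadd (u n) (hopp l))) < eps
}.

Arguments hadd {h}. Arguments hzero {h}. Arguments hopp {h}.
Arguments hscal {h}. Arguments hinner {h}.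

Section Geometry.
Variable X : Hilbert.

Definition hsub (x y : X) : X := hadd x (hopp y).
Definition hnorm (x : X) : R := sqrt (hinner x x).
Definition hdist (x y : X) : R := hnorm (hsub x y).

Definition interior (V : X -> Prop) (x : X) : Prop :=
  exists eps, 0 < eps /\ forall y, hdist y x < eps -> V y.
Definition closure (V : X -> Prop) (x : X) : Prop :=
  forall eps, 0 < eps -> exists y, V y /\ hdist y x < eps.
Definition is_closed (V : X -> Prop) : Prop :=
  forall x, closure V x -> V x.
Definition boundary (V : X -> Prop) (x : X) : Prop :=
  closure V x /\ ~ interior V x.
Definition hbounded (V : X -> Prop) : Prop :=
  exists M, forall x, V x -> hnorm x <= M.

Definition convex (V : X -> Prop) : Prop :=
  forall x y t, V x -> V y -> 0 <= t <= 1 ->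
    V (hadd (hscal t x) (hscal (1 - t) y)).
Definition convex_body (V : X -> Prop) : Prop :=
  convex V /\ is_closed V /\ exists x, interior V x.

Definition frechet_grad (g : X -> R) (v p : X) : Prop :=
  forall eps, 0 < eps -> exists delta, 0 < delta /\
    forall q, hdist q p < delta ->
      Rabs (g q - g p - hinner v (hsub q p)) <= eps * hdist q p.

Definition local_chart (S : X -> Prop) (p : X) (delta : R) (g : X -> R) (G : X -> X) : Prop :=
  0 < delta /\
  (forall q, hdist q p < delta ->
     frechet_grad g (G q) q /\
     (forall eps, 0 < eps -> exists eta, 0 < eta /\
        forall q', hdist q' q < eta -> hdist (G q') (G q) < eps)) /\
  G p <> hzero /\
  (forall q, hdist q p < delta -> (S q <-> g q = 0)).

Definition C1_hypersurface (S : X -> Prop) : Prop :=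
  forall p, S p -> exists delta g G, local_chart S p delta g G.

(* n is the outer unit normal to the boundary of V at x:
   a unit vector normal to the tangent hyperplane of the boundary at x
   (i.e. parallel to the gradient of a local defining function), pointing
   out of V. *)
Definition outer_unit_normal (V : X -> Prop) (x n : X) : Prop :=
  hnorm n = 1 /\
  (exists delta g G, local_chart (boundary V) x delta g G /\
     (n = hscal (/ hnorm (G x)) (G x) \/ n = hscal (- / hnorm (G x)) (G x))) /\
  (exists t0, 0 < t0 /\ forall t, 0 < t < t0 -> ~ V (hadd x (hscal t n))).

Definition normal_field (V : X -> Prop) (NV : X -> X) : Prop :=
  forall x, boundary V x -> outer_unit_normal V x (NV x).

Definition lipschitz_on (S : X -> Prop) (f : X -> X) (L : R) : Prop :=
  forall x y, S x -> S y -> hdist (f x) (f y) <= L * hdist x y.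

Definition C11_body (V : X -> Prop) : Prop :=
  convex_body V /\ C1_hypersurface (boundary V) /\
  exists NV L, 0 < L /\ normal_field V NV /\ lipschitz_on (boundary V) NV L.

End Geometry.

Arguments hsub {X}. Arguments hnorm {X}. Arguments hdist {X}.
Arguments interior {X}. Arguments closure {X}. Arguments is_closed {X}.
Arguments boundary {X}. Arguments hbounded {X}. Arguments convex {X}.
Arguments convex_body {X}. Arguments frechet_grad {X}. Arguments local_chart {X}.
Arguments C1_hypersurface {X}. Arguments outer_unit_normal {X}.
Arguments normal_field {X}. Arguments lipschitz_on {X}. Arguments C11_body {X}.

(* Main.v *)
Require Import Defs.
From Stdlib Require Import Reals Lra Psatz Classical ClassicalEpsilon.
Open Scope R_scope.
Local Notation interior := (@Defs.interior _).

Lemma ip_addr {X : Hilbert} (x y z : X) : hinner x (hadd y z) = hinner x y + hinner x z.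
Proof. rewrite hinner_sym, hinner_add_l, (hinner_sym _ y), (hinner_sym _ z); ring. Qed.
Lemma ip_scalr {X : Hilbert} a (x y : X) : hinner x (hscal a y) = a * hinner x y.
Proof. rewrite hinner_sym, hinner_scal_l, hinner_sym; ring. Qed.
Lemma ip_zerol {X : Hilbert} (y : X) : hinner hzero y = 0.
Proof.
  assert (H := hinner_add_l X hzero hzero y). rewrite hadd_0 in H. lra.
Qed.
Lemma ip_zeror {X : Hilbert} (y : X) : hinner y hzero = 0.
Proof. rewrite hinner_sym; apply ip_zerol. Qed.
Lemma ip_oppl {X : Hilbert} (x y : X) : hinner (hopp x) y = - hinner x y.
Proof.
  assert (H := hinner_add_l X x (hopp x) y). rewrite hadd_opp, ip_zerol in H. lra.
Qed.
Lemma ip_oppr {X : Hilbert} (x y : X) : hinner y (hopp x) = - hinner y x.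
Proof. rewrite hinner_sym, ip_oppl, hinner_sym; ring. Qed.
Lemma ip_subl {X : Hilbert} (x y z : X) : hinner (hsub x y) z = hinner x z - hinner y z.
Proof. unfold hsub. rewrite hinner_add_l, ip_oppl; ring. Qed.
Lemma ip_subr {X : Hilbert} (x y z : X) : hinner z (hsub x y) = hinner z x - hinner z y.
Proof. unfold hsub. rewrite ip_addr, ip_oppr; ring. Qed.

Create HintDb ipdb.
#[export] Hint Rewrite @hinner_add_l @ip_addr @hinner_scal_l @ip_scalr @ip_zerol @ip_zeror
  @ip_oppl @ip_oppr @ip_subl @ip_subr : ipdb.
Ltac ips := autorewrite with ipdb.
Ltac ipsin H := autorewrite with ipdb in H.

Lemma hext {X : Hilbert} (u v : X) : (forall w, hinner u w = hinner v w) -> u = v.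
Proof.
  intro H. assert (Hd : hsub u v = hzero).
  { apply hinner_def. rewrite ip_subl, !H. ring. }
  unfold hsub in Hd.
  rewrite <- (hadd_0 X u), <- (hadd_opp X v), (hadd_comm X v), hadd_assoc, Hd,
    hadd_comm, hadd_0. reflexivity.
Qed.

Ltac hext_tac := apply hext; intro; ips; try unfold Rdiv; ring.

Lemma hnorm_nonneg {X : Hilbert} (x : X) : 0 <= hnorm x.
Proof. apply sqrt_pos. Qed.
Lemma hnorm_sq {X : Hilbert} (x : X) : hnorm x * hnorm x = hinner x x.
Proof. unfold hnorm. apply sqrt_sqrt, hinner_pos. Qed.
Lemma hnorm_sq2 {X : Hilbert} (x : X) : hnorm x ^ 2 = hinner x x.
Proof. rewrite <- hnorm_sq. ring. Qed.

Lemma norm_facts {X : Hilbert} (x : X) : 0 <= hnorm x /\ hnorm x * hnorm x = hinner x x.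
Proof. split; [apply hnorm_nonneg | apply hnorm_sq]. Qed.

Lemma norm_le {X : Hilbert} (x : X) c : 0 <= c -> hinner x x <= c * c -> hnorm x <= c.
Proof. intros Hc H. destruct (norm_facts x). nra. Qed.
Lemma norm_lt {X : Hilbert} (x : X) c : 0 <= c -> hinner x x < c * c -> hnorm x < c.
Proof. intros Hc H. destruct (norm_facts x). nra. Qed.
Lemma norm_ge {X : Hilbert} (x : X) c : c * c <= hinner x x -> 0 <= c -> c <= hnorm x.
Proof. intros H Hc. destruct (norm_facts x). nra. Qed.

Lemma norm_eq {X : Hilbert} (x : X) c : 0 <= c -> hinner x x = c * c -> hnorm x = c.
Proof. intros Hc H. unfold hnorm. rewrite H. apply sqrt_square; auto. Qed.

Lemma norm_zero_eq {X : Hilbert} (x : X) : hnorm x = 0 -> x = hzero.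
Proof. intro H. apply hinner_def. rewrite <- hnorm_sq, H. ring. Qed.

Lemma cs {X : Hilbert} (x y : X) : Rabs (hinner x y) <= hnorm x * hnorm y.
Proof.
  destruct (norm_facts x) as [Hx1 Hx2]. destruct (norm_facts y) as [Hy1 Hy2].
  assert (Hsq : hinner x y * hinner x y <= hinner x x * hinner y y).
  { destruct (Req_dec (hinner y y) 0) as [E|E].
    - apply hinner_def in E. subst y. rewrite ip_zeror. nra.
    - assert (P := hinner_pos X (hsub x (hscal (hinner x y / hinner y y) y))).
      ipsin P. rewrite (hinner_sym _ y x) in P.
      assert (0 < hinner y y) by (destruct (hinner_pos X y); lra).
      set (a := hinner x y) in *. set (b := hinner y y) in *.
      assert (P2 : hinner x x - a * a / b >= 0).
      { replace (hinner x x - a * a / b) with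
          (hinner x x - a / b * a - a / b * a + a / b * (a / b * b)) by (field; lra). lra. }
      assert (P3 : (hinner x x - a * a / b) * b >= 0) by nra.
      replace ((hinner x x - a * a / b) * b) with (hinner x x * b - a * a) in P3 by (field; lra).
      nra. }
  assert (Hp : 0 <= hnorm x * hnorm y) by nra.
  assert (Hpp : (hnorm x * hnorm y) * (hnorm x * hnorm y) = hinner x x * hinner y y) by
    (rewrite <- Hx2, <- Hy2; ring).
  apply Rabs_le. split; nra.
Qed.
Lemma cs1 {X : Hilbert} (x y : X) : hinner x y <= hnorm x * hnorm y.
Proof. assert (H := cs x y). assert (H2 := Rle_abs (hinner x y)). lra. Qed.

Lemma tri {X : Hilbert} (x y : X) : hnorm (hadd x y) <= hnorm x + hnorm y.
Proof.
  destruct (norm_facts x) as [Hx1 Hx2]. destruct (norm_facts y) as [Hy1 Hy2].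
  assert (H := cs1 x y). apply norm_le; [lra|]. ips. rewrite (hinner_sym _ y x). nra.
Qed.
Lemma norm_scal {X : Hilbert} a (x : X) : hnorm (hscal a x) = Rabs a * hnorm x.
Proof.
  destruct (norm_facts x) as [Hx1 Hx2]. apply norm_eq.
  - apply Rmult_le_pos; [apply Rabs_pos|lra].
  - ips. rewrite <- Hx2. replace (Rabs a * hnorm x * (Rabs a * hnorm x)) with
      ((Rabs a * Rabs a) * (hnorm x * hnorm x)) by ring. rewrite <- Rabs_mult, Rabs_right. ring.
    nra.
Qed.
Lemma norm_opp {X : Hilbert} (x : X) : hnorm (hopp x) = hnorm x.
Proof. unfold hnorm. ips. f_equal. ring. Qed.
Lemma hdist_sym {X : Hilbert} (x y : X) : hdist x y = hdist y x.
Proof. unfold hdist, hnorm. ips. f_equal. ring. Qed.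
Lemma hdist_self {X : Hilbert} (x : X) : hdist x x = 0.
Proof. unfold hdist, hnorm. ips. replace (hinner x x - hinner x x - (hinner x x - hinner x x)) with 0 by ring.
  apply sqrt_0. Qed.
Lemma hdist_tri {X : Hilbert} (x y z : X) : hdist x z <= hdist x y + hdist y z.
Proof.
  unfold hdist. replace (hsub x z) with (hadd (hsub x y) (hsub y z)) by hext_tac. apply tri.
Qed.
Lemma hdist_nonneg {X : Hilbert} (x y : X) : 0 <= hdist x y.
Proof. apply hnorm_nonneg. Qed.

Definition seg {X : Hilbert} (a b : X) (l : R) : X := hadd a (hscal l (hsub b a)).

Lemma seg_dist {X : Hilbert} (a b : X) l m : hdist (seg a b l) (seg a b m) = Rabs (l - m) * hnorm (hsub b a).
Proof.
  unfold hdist. replace (hsub (seg a b l) (seg a b m)) with (hscal (l - m) (hsub b a))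
    by (unfold seg; hext_tac). apply norm_scal.
Qed.
Lemma seg1 {X : Hilbert} (a b : X) : seg a b 1 = b.
Proof. unfold seg; hext_tac. Qed.
Lemma seg0 {X : Hilbert} (a b : X) : seg a b 0 = a.
Proof. unfold seg; hext_tac. Qed.

Lemma closure_self {X : Hilbert} (V : X -> Prop) x : V x -> closure V x.
Proof. intros Hx e He. exists x. split; auto. rewrite hdist_self; lra. Qed.

Lemma closed_bd {X : Hilbert} (V : X -> Prop) x : is_closed V -> boundary V x -> V x.
Proof. intros Hc [Hx _]. apply Hc, Hx. Qed.

Lemma crossing {X : Hilbert} (V : X -> Prop) (a b : X) :
  is_closed V -> V a -> ~ V b -> exists l, 0 <= l <= 1 /\ boundary V (seg a b l).
Proof.
  intros Hc Ha Hb.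
  set (S := fun l => 0 <= l <= 1 /\ V (seg a b l)).
  assert (Hub : bound S) by (exists 1; intros l [Hl _]; lra).
  assert (Hne : exists l, S l) by (exists 0; split; [lra| rewrite seg0; auto]).
  destruct (completeness S Hub Hne) as [s [Hs1 Hs2]].
  assert (Hs0 : 0 <= s) by (apply Hs1; split; [lra| rewrite seg0; auto]).
  assert (Hs1' : s <= 1) by (apply Hs2; intros l [Hl _]; lra).
  set (K := hnorm (hsub b a)). assert (HK := hnorm_nonneg (hsub b a)). fold K in HK.
  assert (Hvs : V (seg a b s)).
  { apply Hc. intros e He.
    destruct (classic (exists l, S l /\ s - e / (K + 1) < l)) as [[l [Hl1 Hl2]]|Hn].
    - exists (seg a b l). split; [apply Hl1|]. rewrite seg_dist. fold K.
      assert (l <= s) by (apply Hs1; auto).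
      rewrite Rabs_left1 by lra.
      assert (e / (K + 1) * K < e).
      { apply (Rmult_lt_reg_r (K+1)); [lra|]. field_simplify; nra. }
      assert ((s - l) * K <= e / (K + 1) * K) by (apply Rmult_le_compat_r; lra). lra.
    - exfalso. assert (s <= s - e / (K + 1)).
      { apply Hs2. intros l Hl. destruct (Rle_dec l (s - e / (K + 1))); auto.
        exfalso; apply Hn; exists l; split; auto; lra. }
      assert (0 < e / (K + 1)) by (apply Rdiv_lt_0_compat; lra). lra. }
  assert (Hs1'' : s < 1) by (destruct (Req_dec s 1); [subst; rewrite seg1 in Hvs; tauto| lra]).
  exists s. split; [lra|]. split; [apply closure_self; auto|].
  intros [e [He Hi]].
  set (l := s + Rmin (1 - s) (e / (2 * (K + 1)))).
  assert (Hm1 := Rmin_l (1 - s) (e / (2 * (K + 1)))).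
  assert (Hm2 := Rmin_r (1 - s) (e / (2 * (K + 1)))).
  assert (Hm0 : 0 < Rmin (1 - s) (e / (2 * (K + 1)))).
  { apply Rmin_pos; [lra| apply Rdiv_lt_0_compat; lra]. }
  assert (S l).
  { split; [unfold l; lra|]. apply Hi. rewrite seg_dist. fold K.
    unfold l. replace (s + Rmin (1 - s) (e / (2 * (K + 1))) - s) with (Rmin (1 - s) (e / (2 * (K + 1)))) by ring.
    rewrite Rabs_right by lra.
    assert (e / (2 * (K + 1)) * K < e).
    { apply (Rmult_lt_reg_r (2*(K+1))); [lra|]. field_simplify; nra. }
    assert (Rmin (1 - s) (e / (2 * (K + 1))) * K <= e / (2 * (K + 1)) * K) by (apply Rmult_le_compat_r; lra).
    lra. }
  assert (l <= s) by (apply Hs1; auto). unfold l in *. lra.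
Qed.

Lemma unit_ip {X : Hilbert} (n : X) : hnorm n = 1 -> hinner n n = 1.
Proof. intro H. rewrite <- hnorm_sq, H. ring. Qed.

Lemma small_mul a K t : 0 < K -> 0 < a -> t <= a / (2 * K) -> t * K < a.
Proof.
  intros HK Ha Ht. assert (t * K <= a / (2 * K) * K) by (apply Rmult_le_compat_r; lra).
  replace (a / (2 * K) * K) with (a / 2) in H by (field; lra). lra.
Qed.

Lemma supporting {X : Hilbert} (V : X -> Prop) x n : convex V -> is_closed V ->
  boundary V x -> outer_unit_normal V x n -> forall z, V z -> hinner n (hsub z x) <= 0.
Proof.
  intros Hcv Hcl Hbx [Hn1 [[delta [g [G [[Hd [Hloc [HG0 Hzero]]] Hsign]]]] [t0 [Ht0 Hout]]]] z Hz.
  assert (Hx : V x) by (apply closed_bd; auto).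
  apply Rnot_lt_le; intro Hc.
  set (c := hinner n (hsub z x)) in *. set (K := hnorm (hsub z x)).
  assert (Hnn := unit_ip n Hn1).
  assert (HcK : c <= K) by (assert (H := cs1 n (hsub z x)); rewrite Hn1 in H; fold c K in H; lra).
  set (Gn := hnorm (G x)).
  assert (HGn : 0 < Gn).
  { destruct (hnorm_nonneg (G x)) as [H|H]; auto. exfalso; apply HG0, norm_zero_eq; auto. }
  assert (Hsg : exists sg, (sg = 1 \/ sg = -1) /\ forall v, hinner (G x) v = sg * Gn * hinner n v).
  { destruct Hsign as [E|E]; [exists 1|exists (-1)]; (split; [lra|]); intro v; rewrite E; ips;
      fold Gn; field; lra. }
  destruct Hsg as [sg [Hsg Hsgv]].
  assert (Hdx : hdist x x < delta) by (rewrite hdist_self; lra).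
  destruct (Hloc x Hdx) as [Hfr _].
  assert (Heps : 0 < Gn * c / (2 * K)) by (apply Rdiv_lt_0_compat; nra).
  destruct (Hfr _ Heps) as [d1 [Hd1 Hq]].
  assert (Hgx : g x = 0) by (apply (Hzero x Hdx); auto).
  assert (HK : 0 < K) by lra.
  set (t := Rmin 1 (Rmin (d1/(2*K)) (Rmin (delta/(2*K)) (t0/(2*c))))).
  assert (Ht1 : t <= 1) by apply Rmin_l.
  assert (Ht2 : t <= d1/(2*K)) by (eapply Rle_trans; [apply Rmin_r| apply Rmin_l]).
  assert (Ht3 : t <= delta/(2*K)) by
    (eapply Rle_trans; [apply Rmin_r| eapply Rle_trans; [apply Rmin_r| apply Rmin_l]]).
  assert (Ht4 : t <= t0/(2*c)) by
    (eapply Rle_trans; [apply Rmin_r| eapply Rle_trans; [apply Rmin_r| apply Rmin_r]]).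
  assert (Ht0' : 0 < t).
  { unfold t. repeat apply Rmin_pos; try lra; apply Rdiv_lt_0_compat; lra. }
  assert (HtK1 := small_mul d1 K t HK Hd1 Ht2).
  assert (HtK2 := small_mul delta K t HK Hd Ht3).
  assert (Htc := small_mul t0 c t Hc Ht0 Ht4).
  set (s := t * c).
  set (q0 := hadd x (hscal t (hsub z x))).
  assert (Hq0 : V q0).
  { replace q0 with (hadd (hscal t z) (hscal (1 - t) x)) by (unfold q0; hext_tac).
    apply Hcv; auto; lra. }
  set (q1 := hadd x (hscal s n)).
  assert (Hq1 : ~ V q1) by (apply Hout; unfold s; split; nra).
  destruct (crossing V q0 q1 Hcl Hq0 Hq1) as [l [Hl Hbq]].
  set (q := seg q0 q1 l) in *.
  assert (Eq : hsub q x = hadd (hscal ((1-l)*t) (hsub z x)) (hscal (l*s) n)).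
  { unfold q, seg, q0, q1. hext_tac. }
  assert (Hqx : hdist q x <= t * K).
  { unfold hdist. rewrite Eq. eapply Rle_trans; [apply tri|]. rewrite !norm_scal, Hn1.
    fold K. unfold s. rewrite (Rabs_right ((1-l)*t)) by (apply Rle_ge, Rmult_le_pos; lra). rewrite (Rabs_right (l*(t*c))) by (apply Rle_ge, Rmult_le_pos; [lra| apply Rmult_le_pos; lra]).
    assert (0 <= l * t * (K - c)) by (apply Rmult_le_pos; nra). nra. }
  assert (Hgq : g q = 0) by (apply (Hzero q); auto; lra).
  assert (Hdq : hdist q x < d1) by lra.
  specialize (Hq q Hdq). rewrite Hgq, Hgx, Hsgv, Eq in Hq. ipsin Hq.
  replace (0 - 0 - sg * Gn * ((1 - l) * t * (hinner n z - hinner n x) + l * s * hinner n n))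
    with (- (sg * (Gn * t * c))) in Hq by (unfold s, c; ips; rewrite Hnn; ring).
  rewrite Rabs_Ropp, Rabs_mult in Hq.
  assert (Hsa : Rabs sg = 1) by (destruct Hsg as [E|E]; rewrite E; [apply Rabs_R1| rewrite Rabs_left; lra]).
  rewrite Hsa, Rabs_right in Hq by (apply Rle_ge; repeat apply Rmult_le_pos; lra).
  assert (Gn * c / (2 * K) * hdist q x <= Gn * c / (2 * K) * (t * K)) by (apply Rmult_le_compat_l; lra).
  replace (Gn * c / (2 * K) * (t * K)) with (Gn * t * c / 2) in H by (field; lra).
  assert (0 < Gn * t * c) by (repeat apply Rmult_lt_0_compat; lra).
  lra.
Qed.

Lemma zero_sub {X : Hilbert} (u m : X) : hinner (hsub u m) (hsub u m) = 0 -> u = m.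
Proof.
  intro H. apply hinner_def in H. apply hext. intro w.
  assert (hinner (hsub u m) w = 0) by (rewrite H; apply ip_zerol). ipsin H0. lra.
Qed.

Lemma unique_normal {X : Hilbert} (V : X -> Prop) x u m rho :
  hnorm u = 1 -> hnorm m = 1 -> 0 < rho ->
  (forall z, V z -> hinner u (hsub z x) <= 0) ->
  (forall z, hdist z (hsub x (hscal rho m)) < rho -> V z) -> u = m.
Proof.
  intros Hu Hm Hr Hs Hb.
  assert (Huu := unit_ip u Hu). assert (Hmm := unit_ip m Hm).
  set (a := hinner u m).
  assert (Ha : Rabs a <= 1) by (assert (H := cs u m); rewrite Hu, Hm in H; unfold a; lra).
  assert (Ha1 : -1 <= a) by (assert (H := Rabs_Ropp a); assert (H2 := Rle_abs (- a)); lra).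
  assert (Hge : 1 <= a).
  { apply Rnot_lt_le. intro Hlt.
    set (r' := rho * (1 + a) / 2).
    assert (Hr' : 0 <= r' < rho) by (unfold r'; split; nra).
    set (z := hadd (hsub x (hscal rho m)) (hscal r' u)).
    assert (Hz : V z).
    { apply Hb. unfold hdist. replace (hsub z (hsub x (hscal rho m))) with (hscal r' u) by (unfold z; hext_tac).
      rewrite norm_scal, Hu, Rabs_right; lra. }
    specialize (Hs z Hz). unfold z in Hs. ipsin Hs. rewrite Huu in Hs. fold a in Hs.
    unfold r' in Hs. nra. }
  apply zero_sub. ips. rewrite Huu, Hmm, (hinner_sym _ m u). fold a.
  assert (0 <= hinner (hsub u m) (hsub u m)) by apply hinner_pos. ipsin H.
  rewrite Huu, Hmm, (hinner_sym _ m u) in H. fold a in H. lra.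
Qed.

Lemma ball_in {X : Hilbert} (V : X -> Prop) NV L :
  convex V -> is_closed V -> (exists p, interior V p) -> normal_field V NV ->
  lipschitz_on (boundary V) NV L -> 0 < L ->
  forall x, boundary V x -> forall z,
    hdist z (hsub x (hscal (/ (2 * L)) (NV x))) < / (2 * L) -> V z.
Proof.
  intros Hcv Hcl [p0 [dl [Hdl Hp0]]] Hnf Hlip HL x Hbx.
  set (rho := / (2 * L)). assert (Hrho : 0 < rho) by (unfold rho; apply Rinv_0_lt_compat; lra).
  set (n := NV x). assert (Hn := Hnf x Hbx). fold n in Hn.
  assert (Hn1 : hnorm n = 1) by apply Hn. assert (Hnn := unit_ip n Hn1).
  set (c := hsub x (hscal rho n)).
  assert (Hx : V x) by (apply closed_bd; auto).
  assert (Quad : forall w, boundary V w -> hinner n (hsub x w) <= L * (hdist x w * hdist x w)).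
  { intros w Hbw.
    assert (S1 := supporting V w (NV w) Hcv Hcl Hbw (Hnf w Hbw) x Hx).
    assert (Lp := Hlip x w Hbx Hbw). fold n in Lp.
    assert (C1 := cs1 (hsub n (NV w)) (hsub x w)).
    replace (hinner n (hsub x w)) with (hinner (hsub n (NV w)) (hsub x w) + hinner (NV w) (hsub x w))
      by (rewrite ip_subl; ring).
    fold (hdist n (NV w)) in C1. fold (hdist x w) in C1.
    assert (0 <= hdist x w) by apply hdist_nonneg.
    assert (hdist n (NV w) * hdist x w <= L * hdist x w * hdist x w) by (apply Rmult_le_compat_r; lra).
    lra. }
  assert (NoBd : forall w, boundary V w -> ~ hdist w c < rho).
  { intros w Hbw Hlt. assert (Q := Quad w Hbw).
    assert (E1 : hsub w c = hadd (hsub w x) (hscal rho n)) by (unfold c; hext_tac).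
    assert (E2 : hsub x w = hscal (-1) (hsub w x)) by hext_tac.
    unfold hdist in Hlt, Q. rewrite E1 in Hlt. rewrite E2, norm_scal in Q.
    set (a := hsub w x) in *.
    destruct (norm_facts (hadd a (hscal rho n))) as [F1 F2].
    destruct (norm_facts a) as [G1 G2].
    assert (hinner (hadd a (hscal rho n)) (hadd a (hscal rho n)) < rho * rho) by nra.
    assert (E3 : hinner (hadd a (hscal rho n)) (hadd a (hscal rho n)) = hinner a a + 2 * rho * hinner n a + rho * rho)
      by (ips; rewrite Hnn, (hinner_sym _ a n); ring).
    ipsin Q. rewrite Rabs_left in Q by lra.
    assert (2 * rho * L = 1) by (unfold rho; field; lra).
    assert (Q2 : - hinner n a <= L * hinner a a) by (rewrite <- G2; lra).
    assert (Q3 : 2 * rho * (- hinner n a) <= 2 * rho * (L * hinner a a)) by (apply Rmult_le_compat_l; lra).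
    replace (2 * rho * (L * hinner a a)) with ((2 * rho * L) * hinner a a) in Q3 by ring. rewrite H0 in Q3.
    lra. }
  assert (Hp1 : V (hadd p0 (hscal (dl/2) n))).
  { apply Hp0. unfold hdist. replace (hsub (hadd p0 (hscal (dl / 2) n)) p0) with (hscal (dl/2) n) by hext_tac.
    rewrite norm_scal, Hn1, Rabs_right; lra. }
  assert (Hs := supporting V x n Hcv Hcl Hbx Hn _ Hp1). ipsin Hs. rewrite Hnn in Hs.
  set (b := hsub p0 x).
  assert (Hnb : hinner n b <= - (dl / 2)) by (unfold b; ips; lra).
  set (K2 := hinner b b). assert (HK2 : 0 <= K2) by apply hinner_pos.
  set (t := Rmin 1 (rho * dl / (2 * (K2 + 1)))).
  assert (Ht1 : t <= 1) by apply Rmin_l.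
  assert (Ht0 : 0 < t) by (apply Rmin_pos; [lra| apply Rdiv_lt_0_compat; nra]).
  assert (HtK : t * (K2 + 1) < rho * dl) by (apply small_mul; try nra; apply Rmin_r).
  set (q := hadd x (hscal t b)).
  assert (Hq : V q).
  { replace q with (hadd (hscal t p0) (hscal (1 - t) x)) by (unfold q, b; hext_tac). apply Hcv; [apply Hp0; rewrite hdist_self; lra | exact Hx | lra]. }
  assert (Hqc : hdist q c < rho).
  { unfold hdist. replace (hsub q c) with (hadd (hscal t b) (hscal rho n)) by (unfold q, c; hext_tac).
    apply norm_lt; [lra|]. ips. rewrite Hnn, (hinner_sym _ b n). fold K2. assert (t * (t * K2) < t * (rho * dl)) by (apply Rmult_lt_compat_l; nra). assert (t * rho * hinner n b <= t * rho * (-(dl/2))) by (apply Rmult_le_compat_l; nra). nra. }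
  intros z Hz. apply NNPP. intro Hnz.
  destruct (crossing V q z Hcl Hq Hnz) as [l [Hl Hbw]].
  apply (NoBd _ Hbw). unfold hdist.
  replace (hsub (seg q z l) c) with (hadd (hscal (1 - l) (hsub q c)) (hscal l (hsub z c))) by (unfold seg; hext_tac).
  eapply Rle_lt_trans; [apply tri|]. rewrite !norm_scal, Rabs_right, (Rabs_right l) by lra.
  fold (hdist q c) (hdist z c). assert (Hz' : hdist z c < rho) by exact Hz.
  set (m := Rmax (hdist q c) (hdist z c)).
  assert (m < rho) by (apply Rmax_lub_lt; lra).
  assert ((1 - l) * hdist q c <= (1 - l) * m) by (apply Rmult_le_compat_l; [lra| apply Rmax_l]).
  assert (l * hdist z c <= l * m) by (apply Rmult_le_compat_l; [lra| apply Rmax_r]).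
  lra.
Qed.

Lemma dir12 {X : Hilbert} (C : X -> Prop) (N : X -> X) :
  (exists V : X -> Prop, C11_body V /\
      (forall x, C x -> boundary V x /\ outer_unit_normal V x (N x))) ->
  exists r, 0 < r /\ forall x y, C x -> C y ->
      hinner (N y) (hsub y x) >= r / 2 * (hnorm (hsub (N y) (N x))) ^ 2.
Proof.
  intros [V [[[Hcv [Hcl Hint]] [_ [NV [L [HL [Hnf Hlip]]]]]] HC]].
  set (r := / (2 * L)). assert (Hr : 0 < r) by (unfold r; apply Rinv_0_lt_compat; lra).
  assert (Hball := ball_in V NV L Hcv Hcl Hint Hnf Hlip HL).
  assert (HNe : forall x, C x -> N x = NV x).
  { intros x Hx. destruct (HC x Hx) as [Hb Hn].
    apply (unique_normal V x (N x) (NV x) r (proj1 Hn) (proj1 (Hnf x Hb)) Hr).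
    - apply supporting; auto.
    - apply Hball; auto. }
  exists r. split; auto. intros x y Hx Hy.
  destruct (HC x Hx) as [Hbx Hnx]. destruct (HC y Hy) as [Hby Hny].
  assert (Hux := unit_ip _ (proj1 Hnx)). assert (Huy := unit_ip _ (proj1 Hny)).
  set (a := hinner (N y) (hsub x y) - r * hinner (N y) (N x)).
  assert (Hall : forall t, 0 <= t < 1 -> a + t * r <= 0).
  { intros t Ht.
    set (z := hadd (hsub x (hscal r (N x))) (hscal (t * r) (N y))).
    assert (Hz : V z).
    { apply (Hball x Hbx). rewrite <- HNe by auto. fold r. unfold hdist.
      replace (hsub z (hsub x (hscal r (N x)))) with (hscal (t * r) (N y)) by (unfold z; hext_tac).
      rewrite norm_scal, (proj1 Hny), Rabs_right; nra. }
    assert (S := supporting V y (N y) Hcv Hcl Hby Hny z Hz).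
    unfold z in S. ipsin S. rewrite Huy in S. unfold a. ips. lra. }
  assert (Ha : a + r <= 0).
  { apply Rnot_lt_le. intro Hlt.
    set (e := Rmin 1 ((a + r) / (2 * r))).
    assert (He1 : e <= 1) by apply Rmin_l.
    assert (He2 : e <= (a + r) / (2 * r)) by apply Rmin_r.
    assert (He0 : 0 < e) by (apply Rmin_pos; [lra| apply Rdiv_lt_0_compat; lra]).
    assert (H := Hall (1 - e) ltac:(lra)).
    assert (e * r <= (a + r) / 2).
    { assert (e * r <= (a + r) / (2 * r) * r) by (apply Rmult_le_compat_r; lra).
      replace ((a + r) / (2 * r) * r) with ((a + r) / 2) in H0 by (field; lra). lra. }
    lra. }
  rewrite hnorm_sq2. ips. rewrite Hux, Huy, (hinner_sym _ (N x) (N y)).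
  unfold a in Ha. ipsin Ha. lra.
Qed.

Lemma inv_n_pos (n : nat) : 0 < / (INR n + 1).
Proof. apply Rinv_0_lt_compat. assert (H := pos_INR n). lra. Qed.

Lemma inv_n_le (n N : nat) : (0 < N)%nat -> (N <= n)%nat -> / (INR n + 1) <= / INR N.
Proof.
  intros H0 H. apply Rinv_le_contravar. apply lt_0_INR; auto.
  assert (H1 := le_INR _ _ H). lra.
Qed.

Lemma proj_exists {X : Hilbert} (W : X -> Prop) (w0 : X) : is_closed W -> convex W -> W w0 ->
  forall z, exists p, W p /\ forall w, W w -> hinner (hsub z p) (hsub w p) <= 0.
Proof.
  intros Hcl Hcv Hw0 z.
  set (E := fun v => exists w, W w /\ v = - hdist z w).
  assert (HbE : bound E) by (exists 0; intros v [w [_ ->]]; assert (H := hdist_nonneg z w); lra).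
  assert (HnE : exists v, E v) by (exists (- hdist z w0); exists w0; auto).
  destruct (completeness E HbE HnE) as [m [Hm1 Hm2]].
  set (d := - m).
  assert (Hd0 : 0 <= d) by (unfold d; assert (m <= 0); [apply Hm2; intros v [w [_ ->]]; assert (H := hdist_nonneg z w); lra| lra]).
  assert (Hd1 : forall w, W w -> d <= hdist z w) by (intros w Hw; assert (- hdist z w <= m) by (apply Hm1; exists w; auto); unfold d; lra).
  assert (Hd2 : forall e, 0 < e -> exists w, W w /\ hdist z w < d + e).
  { intros e He. apply NNPP. intro Hn.
    assert (m <= - (d + e)).
    { apply Hm2. intros v [w [Hw ->]]. destruct (Rlt_dec (hdist z w) (d + e)) as [Hl|Hl].
      - exfalso; apply Hn; exists w; auto.
      - lra. }
    unfold d in H. lra. }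
  set (k := 2 * d + 1).
  assert (Hch : forall n : nat, exists w, W w /\ hdist z w < d + / (INR n + 1)).
  { intro n. apply Hd2, inv_n_pos. }
  set (u := fun n => proj1_sig (constructive_indefinite_description _ (Hch n))).
  assert (Hu : forall n, W (u n) /\ hdist z (u n) < d + / (INR n + 1)).
  { intro n. unfold u. destruct (constructive_indefinite_description _ (Hch n)) as [w Hw]. exact Hw. }
  assert (Hsq : forall n, hinner (hsub z (u n)) (hsub z (u n)) <= d * d + k * / (INR n + 1)).
  { intro n. destruct (Hu n) as [Hw Hlt]. assert (Hd := Hd1 _ Hw).
    assert (Hp := inv_n_pos n). assert (Hp1 : / (INR n + 1) <= 1).
    { rewrite <- Rinv_1. apply Rinv_le_contravar; [lra| assert (H := pos_INR n); lra]. }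
    destruct (norm_facts (hsub z (u n))) as [F1 F2]. rewrite <- F2. unfold hdist in *. unfold k.
    set (e := / (INR n + 1)) in *. set (h := hnorm (hsub z (u n))) in *. nra. }
  assert (Hpar : forall m n, hinner (hsub (u m) (u n)) (hsub (u m) (u n)) <= 2 * k * (/ (INR m + 1) + / (INR n + 1))).
  { intros i j.
    destruct (Hu i) as [Hwi _]. destruct (Hu j) as [Hwj _].
    set (mid := hadd (hscal (1/2) (u i)) (hscal (1 - 1/2) (u j))).
    assert (Hmid : W mid) by (apply Hcv; auto; lra).
    assert (Hdm := Hd1 _ Hmid).
    assert (Hdm2 : d * d <= hinner (hsub z mid) (hsub z mid)).
    { destruct (norm_facts (hsub z mid)) as [F1 F2]. rewrite <- F2. unfold hdist in Hdm. nra. }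
    assert (Ha := Hsq i). assert (Hb := Hsq j).
    set (a := hsub z (u i)) in *. set (b := hsub z (u j)) in *.
    assert (E1 : hsub (u i) (u j) = hsub b a) by (unfold a, b; hext_tac).
    assert (E2 : hsub z mid = hadd (hscal (1/2) a) (hscal (1/2) b)) by (unfold a, b, mid; apply hext; intro; ips; lra).
    rewrite E1. rewrite E2 in Hdm2. ipsin Hdm2. ips. rewrite (hinner_sym _ b a) in *. lra. }
  assert (Hk : 0 < k) by (unfold k; lra).
  assert (Hcau : forall eps, 0 < eps -> exists N, forall m n, (N <= m)%nat -> (N <= n)%nat ->
        sqrt (hinner (hadd (u m) (hopp (u n))) (hadd (u m) (hopp (u n)))) < eps).
  { intros eps He.
    destruct (archimed_cor1 (eps * eps / (4 * k))) as [N [HN HN0]].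
    { apply Rdiv_lt_0_compat; nra. }
    exists N. intros i j Hi Hj.
    change (hnorm (hsub (u i) (u j)) < eps). apply norm_lt; [lra|].
    eapply Rle_lt_trans; [apply Hpar|].
    assert (Hi' := inv_n_le i N HN0 Hi). assert (Hj' := inv_n_le j N HN0 Hj).
    assert (2 * k * (/ (INR i + 1) + / (INR j + 1)) <= 2 * k * (2 * / INR N)) by (apply Rmult_le_compat_l; lra).
    assert (2 * k * (2 * / INR N) < 2 * k * (2 * (eps * eps / (4 * k)))) by (apply Rmult_lt_compat_l; lra).
    replace (2 * k * (2 * (eps * eps / (4 * k)))) with (eps * eps) in H0 by (field; lra). lra. }
  destruct (hcomplete X u Hcau) as [l Hl].
  assert (Hlim : forall eps, 0 < eps -> exists N, forall n, (N <= n)%nat -> hdist (u n) l < eps) by exact Hl.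
  assert (HWl : W l).
  { apply Hcl. intros eps He. destruct (Hlim eps He) as [N HN]. exists (u N). split; [apply Hu| apply HN; lia]. }
  assert (Hzl : hdist z l <= d).
  { apply Rnot_lt_le. intro Hlt. set (g := hdist z l - d).
    destruct (Hlim (g/2) ltac:(unfold g; lra)) as [N1 HN1].
    destruct (archimed_cor1 (g/2) ltac:(unfold g; lra)) as [N2 [HN2 HN20]].
    set (n := max N1 N2).
    assert (A1 := HN1 n ltac:(unfold n; lia)).
    assert (A2 := inv_n_le n N2 HN20 ltac:(unfold n; lia)).
    destruct (Hu n) as [_ A3].
    assert (A4 := hdist_tri z (u n) l). unfold g in *. lra. }
  exists l. split; auto.
  intros w Hw. apply Rnot_lt_le. intro Hbeta.
  set (a := hsub z l) in *. set (b := hsub w l) in *.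
  set (beta := hinner a b) in *.
  set (B2 := hinner b b). assert (HB2 : 0 <= B2) by apply hinner_pos.
  set (t := Rmin 1 (beta / (B2 + 1))).
  assert (Ht1 : t <= 1) by apply Rmin_l.
  assert (Ht2 : t <= beta / (B2 + 1)) by apply Rmin_r.
  assert (Ht0 : 0 < t) by (apply Rmin_pos; [lra| apply Rdiv_lt_0_compat; lra]).
  assert (HtB : t * B2 < 2 * beta).
  { assert (t * (B2 + 1) <= beta / (B2 + 1) * (B2 + 1)) by (apply Rmult_le_compat_r; lra).
    replace (beta / (B2 + 1) * (B2 + 1)) with beta in H by (field; lra). nra. }
  set (y := hadd (hscal t w) (hscal (1 - t) l)).
  assert (Hy : W y) by (apply Hcv; auto; lra).
  assert (Hdy := Hd1 _ Hy).
  assert (Hsq2 : hinner a a <= hinner (hsub z y) (hsub z y)).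
  { destruct (norm_facts (hsub z y)) as [F1 F2]. destruct (norm_facts a) as [G1 G2].
    rewrite <- F2, <- G2. unfold hdist in *. fold a in Hzl. nra. }
  assert (Ey : hsub z y = hsub a (hscal t b)) by (unfold a, b, y; hext_tac).
  rewrite Ey in Hsq2. ipsin Hsq2. rewrite (hinner_sym _ b a) in Hsq2. fold beta B2 in Hsq2.
  assert (t * (t * B2) < t * (2 * beta)) by (apply Rmult_lt_compat_l; lra).
  nra.
Qed.



Definition isproj {X : Hilbert} (W : X -> Prop) (P : X -> X) : Prop :=
  (forall z, W (P z)) /\ (forall z w, W w -> hinner (hsub z (P z)) (hsub w (P z)) <= 0).

Lemma proj_unique {X : Hilbert} W (P : X -> X) z p : isproj W P -> W p ->
  (forall w, W w -> hinner (hsub z p) (hsub w p) <= 0) -> p = P z.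
Proof.
  intros [H1 H2] Hp Hv. apply zero_sub.
  assert (A := Hv _ (H1 z)). assert (B := H2 z p Hp).
  set (q := P z) in *. ipsin A. ipsin B.
  assert (0 <= hinner (hsub p q) (hsub p q)) by apply hinner_pos.
  ips. ipsin H. try rewrite (hinner_sym _ q p) in *. try rewrite (hinner_sym _ q z) in *.
  try rewrite (hinner_sym _ p z) in *.
  lra.
Qed.

Lemma proj_firm {X : Hilbert} W (P : X -> X) x y : isproj W P ->
  hdist (hsub x (P x)) (hsub y (P y)) <= hdist x y.
Proof.
  intros [H1 H2]. assert (A := H2 x (P y) (H1 y)). assert (B := H2 y (P x) (H1 x)).
  set (p := P x) in *. set (q := P y) in *.
  unfold hdist. apply norm_le; [apply hnorm_nonneg|]. rewrite hnorm_sq.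
  ipsin A. ipsin B. ips.
  try rewrite (hinner_sym _ y x) in *. try rewrite (hinner_sym _ p x) in *.
  try rewrite (hinner_sym _ q x) in *. try rewrite (hinner_sym _ q y) in *.
  try rewrite (hinner_sym _ p y) in *. try rewrite (hinner_sym _ q p) in *.
  assert (0 <= hinner (hsub p q) (hsub p q)) by apply hinner_pos. ipsin H.
  try rewrite (hinner_sym _ q p) in H.
  lra.
Qed.

Lemma proj_near {X : Hilbert} W (P : X -> X) z w : isproj W P -> W w -> hdist z (P z) <= hdist z w.
Proof.
  intros [H1 H2] Hw. assert (A := H2 z w Hw). unfold hdist.
  apply norm_le; [apply hnorm_nonneg|]. rewrite hnorm_sq.
  set (p := P z) in *.
  replace (hsub z w) with (hsub (hsub z p) (hsub w p)) by hext_tac.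
  set (a := hsub z p) in *. set (b := hsub w p) in *. ips. rewrite (hinner_sym _ b a).
  assert (0 <= hinner b b) by apply hinner_pos. lra.
Qed.

Lemma f_lip {X : Hilbert} W (P : X -> X) x y : isproj W P ->
  hdist x (P x) <= hdist y (P y) + hdist x y.
Proof.
  intro HP. assert (F := proj_firm W P x y HP). unfold hdist in *.
  replace (hsub x (P x)) with (hadd (hsub y (P y)) (hsub (hsub x (P x)) (hsub y (P y)))) by hext_tac.
  eapply Rle_trans; [apply tri|]. lra.
Qed.

Definition Vof {X : Hilbert} (P : X -> X) (r : R) : X -> Prop := fun z => hdist z (P z) <= r.

Lemma V_closed {X : Hilbert} W (P : X -> X) r : isproj W P -> is_closed (Vof P r).
Proof.
  intros HP x Hx. unfold Vof. apply Rnot_lt_le. intro Hlt.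
  destruct (Hx (hdist x (P x) - r) ltac:(lra)) as [y [Hy Hd]].
  unfold Vof in Hy. assert (F := f_lip W P x y HP). rewrite hdist_sym in Hd. lra.
Qed.

Lemma V_convex {X : Hilbert} W (P : X -> X) r : isproj W P -> convex W -> convex (Vof P r).
Proof.
  intros HP Hcv x y t Hx Hy Ht. unfold Vof in *.
  set (w := hadd (hscal t (P x)) (hscal (1 - t) (P y))).
  assert (Hw : W w) by (apply Hcv; auto; apply HP).
  eapply Rle_trans; [apply (proj_near W P _ w HP Hw)|].
  unfold hdist. replace (hsub (hadd (hscal t x) (hscal (1 - t) y)) w) with
    (hadd (hscal t (hsub x (P x))) (hscal (1 - t) (hsub y (P y)))) by (unfold w; hext_tac).
  eapply Rle_trans; [apply tri|]. rewrite !norm_scal, Rabs_right, (Rabs_right (1 - t)) by lra.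
  fold (hdist x (P x)) (hdist y (P y)).
  assert (t * hdist x (P x) <= t * r) by (apply Rmult_le_compat_l; lra).
  assert ((1 - t) * hdist y (P y) <= (1 - t) * r) by (apply Rmult_le_compat_l; lra).
  lra.
Qed.

Lemma V_interior {X : Hilbert} W (P : X -> X) r z : isproj W P -> hdist z (P z) < r -> interior (Vof P r) z.
Proof.
  intros HP Hz. exists (r - hdist z (P z)). split; [lra|]. intros y Hy. unfold Vof.
  assert (F := f_lip W P y z HP). lra.
Qed.

Lemma Rdiv_le_0_compat a b : 0 <= a -> 0 < b -> 0 <= a / b.
Proof. intros. unfold Rdiv. apply Rmult_le_pos; auto. left; apply Rinv_0_lt_compat; auto. Qed.

Lemma ray {X : Hilbert} W (P : X -> X) r x t : isproj W P -> 0 < r -> hdist x (P x) = r -> 0 <= t ->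
  hdist (hadd x (hscal t (hscal (/ r) (hsub x (P x))))) (P (hadd x (hscal t (hscal (/ r) (hsub x (P x)))))) = r + t.
Proof.
  intros HP Hr Hx Ht.
  set (y := hadd x (hscal t (hscal (/ r) (hsub x (P x))))).
  assert (E : hsub y (P x) = hscal (1 + t / r) (hsub x (P x))) by (unfold y; apply hext; intro; ips; unfold Rdiv; ring).
  assert (Py : P x = P y).
  { apply (proj_unique W P y (P x) HP); [apply HP|]. intros w Hw. rewrite E. ips.
    assert (A := proj2 HP x w Hw). ipsin A.
    assert (0 <= 1 + t / r) by (assert (0 <= t / r) by (apply Rdiv_le_0_compat; lra); lra).
    assert ((1 + t / r) * (hinner x w - hinner x (P x) - (hinner (P x) w - hinner (P x) (P x))) <= (1 + t / r) * 0)
      by (apply Rmult_le_compat_l; lra). rewrite Rmult_0_r in H0.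
    lra. }
  rewrite <- Py. unfold hdist. rewrite E, norm_scal. fold (hdist x (P x)). rewrite Hx.
  rewrite Rabs_right. field; lra.
  assert (0 <= t / r) by (apply Rdiv_le_0_compat; lra). lra.
Qed.

Lemma bd_of_eq {X : Hilbert} W (P : X -> X) r x : isproj W P -> 0 < r -> hdist x (P x) = r ->
  boundary (Vof P r) x.
Proof.
  intros HP Hr Hx. split.
  - apply closure_self. unfold Vof. lra.
  - intros [e [He Hi]].
    set (t := e / 2).
    assert (H := Hi (hadd x (hscal t (hscal (/ r) (hsub x (P x)))))).
    unfold Vof in H. rewrite (ray W P r x t HP Hr Hx) in H by (unfold t; lra).
    assert (t < e -> False).
    { intro Ht. assert (r + t <= r); [apply H| unfold t in *; lra].
      unfold hdist. replace (hsub (hadd x (hscal t (hscal (/ r) (hsub x (P x))))) x) with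
        (hscal t (hscal (/ r) (hsub x (P x)))) by hext_tac.
      rewrite !norm_scal. fold (hdist x (P x)). rewrite Hx, !Rabs_right.
      replace (t * (/ r * r)) with t by (field; lra). lra.
      apply Rle_ge, Rlt_le, Rinv_0_lt_compat; lra. unfold t; lra. }
    unfold t in *. lra.
Qed.

Lemma eq_of_bd {X : Hilbert} W (P : X -> X) r x : isproj W P -> boundary (Vof P r) x -> hdist x (P x) = r.
Proof.
  intros HP Hb. assert (Hx : Vof P r x) by (apply (closed_bd _ _ (V_closed W P r HP) Hb)).
  unfold Vof in Hx. destruct Hx as [Hlt|]; auto.
  exfalso. apply (proj2 Hb). apply (V_interior W P); auto.
Qed.

Lemma norm_le_sq {X : Hilbert} (x y : X) : hnorm x <= hnorm y -> hinner x x <= hinner y y.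
Proof. intro H. destruct (norm_facts x) as [A B]. destruct (norm_facts y) as [C D]. nra. Qed.

Definition gV {X : Hilbert} (P : X -> X) (r : R) : X -> R :=
  fun q => hinner (hsub q (P q)) (hsub q (P q)) - r * r.
Definition GV {X : Hilbert} (P : X -> X) : X -> X := fun q => hscal 2 (hsub q (P q)).

Lemma abs_bounds v c : Rabs v <= c -> - c <= v <= c.
Proof. intro H. assert (A := Rle_abs v). assert (B := Rle_abs (- v)). rewrite Rabs_Ropp in B. lra. Qed.

Lemma frechet_gV {X : Hilbert} W (P : X -> X) r p : isproj W P -> frechet_grad (gV P r) (GV P p) p.
Proof.
  intros HP eps He. exists (eps / 3). split; [lra|]. intros q Hq.
  assert (Up := proj_near W P q (P p) HP (proj1 HP p)).
  assert (Lo := proj_near W P p (P q) HP (proj1 HP q)).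
  assert (Fi := proj_firm W P q p HP).
  unfold hdist in *. unfold gV, GV.
  set (a := hsub p (P p)) in *. set (a' := hsub q (P q)) in *. set (h := hsub q p) in *.
  assert (E1 : hsub q (P p) = hadd a h) by (unfold a, h; hext_tac).
  assert (E2 : hsub p (P q) = hsub a' h) by (unfold a', h; hext_tac).
  rewrite E1 in Up. rewrite E2 in Lo.
  apply norm_le_sq in Up. apply norm_le_sq in Lo.
  assert (Cs := cs (hsub a' a) h).
  destruct (norm_facts h) as [Hh1 Hh2].
  assert (Hm : hnorm (hsub a' a) * hnorm h <= hnorm h * hnorm h) by (apply Rmult_le_compat_r; lra).
  assert (H : Rabs (hinner (hsub a' a) h) <= hinner h h) by lra.
  apply abs_bounds in H.
  ipsin Up. ipsin Lo. ipsin H. ips.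
  try rewrite (hinner_sym _ h a) in *. try rewrite (hinner_sym _ h a') in *.
  assert (Hq3 : hnorm h * hnorm h <= eps / 3 * hnorm h) by (apply Rmult_le_compat_r; lra).
  apply Rabs_le. split; nra.
Qed.

Definition nu {X : Hilbert} (P : X -> X) (r : R) (x : X) : X := hscal (/ r) (hsub x (P x)).

Lemma norm_GV {X : Hilbert} W (P : X -> X) r x : isproj W P -> 0 < r -> boundary (Vof P r) x ->
  hnorm (GV P x) = 2 * r.
Proof.
  intros HP Hr Hb. unfold GV. rewrite norm_scal. fold (hdist x (P x)). rewrite (eq_of_bd W P r x HP Hb).
  rewrite Rabs_right; lra.
Qed.

Lemma chart_V {X : Hilbert} W (P : X -> X) r x : isproj W P -> 0 < r -> boundary (Vof P r) x ->
  local_chart (boundary (Vof P r)) x 1 (gV P r) (GV P).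
Proof.
  intros HP Hr Hb. split; [lra|]. split; [|split].
  - intros q _. split; [apply (frechet_gV W); auto|].
    intros eps He. exists (eps / 2). split; [lra|]. intros q' Hq'.
    unfold hdist, GV. replace (hsub (hscal 2 (hsub q' (P q'))) (hscal 2 (hsub q (P q)))) with
      (hscal 2 (hsub (hsub q' (P q')) (hsub q (P q)))) by hext_tac.
    rewrite norm_scal. fold (hdist (hsub q' (P q')) (hsub q (P q))).
    assert (F := proj_firm W P q' q HP). rewrite Rabs_right; lra.
  - intro E. assert (H := norm_GV W P r x HP Hr Hb). rewrite E in H.
    unfold hnorm in H. rewrite ip_zerol, sqrt_0 in H. lra.
  - intros q _. split.
    + intro Hq. assert (H := eq_of_bd W P r q HP Hq). unfold gV. rewrite <- hnorm_sq.
      fold (hdist q (P q)). rewrite H. ring.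
    + intro Hg. apply (bd_of_eq W); auto. unfold hdist. apply norm_eq; [lra|]. unfold gV in Hg. lra.
Qed.

Lemma normal_V {X : Hilbert} W (P : X -> X) r x : isproj W P -> 0 < r -> boundary (Vof P r) x ->
  outer_unit_normal (Vof P r) x (nu P r x).
Proof.
  intros HP Hr Hb. assert (Hx := eq_of_bd W P r x HP Hb). split; [|split].
  - unfold nu. rewrite norm_scal. fold (hdist x (P x)). rewrite Hx, Rabs_right.
    field; lra. apply Rle_ge, Rlt_le, Rinv_0_lt_compat; lra.
  - exists 1, (gV P r), (GV P). split; [apply (chart_V W); auto|]. left.
    rewrite (norm_GV W P r x HP Hr Hb). unfold nu, GV. apply hext; intro; ips. field; lra.
  - exists 1. split; [lra|]. intros t Ht Hv. unfold Vof, nu in Hv.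
    rewrite (ray W P r x t HP Hr Hx) in Hv; lra.
Qed.

Lemma C11_V {X : Hilbert} W (P : X -> X) r w0 : isproj W P -> convex W -> W w0 -> 0 < r ->
  C11_body (Vof P r) /\ normal_field (Vof P r) (nu P r) /\
  lipschitz_on (boundary (Vof P r)) (nu P r) (/ r).
Proof.
  intros HP Hcv Hw0 Hr.
  assert (Hnf : normal_field (Vof P r) (nu P r)) by (intros x Hb; apply (normal_V W); auto).
  assert (Hlip : lipschitz_on (boundary (Vof P r)) (nu P r) (/ r)).
  { intros x y _ _. unfold hdist, nu.
    replace (hsub (hscal (/ r) (hsub x (P x))) (hscal (/ r) (hsub y (P y)))) with
      (hscal (/ r) (hsub (hsub x (P x)) (hsub y (P y)))) by hext_tac.
    rewrite norm_scal. fold (hdist (hsub x (P x)) (hsub y (P y))). fold (hdist x y).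
    assert (F := proj_firm W P x y HP).
    assert (0 < / r) by (apply Rinv_0_lt_compat; lra).
    rewrite Rabs_right by lra. apply Rmult_le_compat_l; lra. }
  split; [|split; auto].
  split; [split; [|split]|split].
  - apply (V_convex W); auto.
  - apply (V_closed W); auto.
  - exists w0. apply (V_interior W); auto.
    assert (H := proj_near W P w0 w0 HP Hw0). rewrite hdist_self in H. lra.
  - intros p Hp. exists 1, (gV P r), (GV P). apply (chart_V W); auto.
  - exists (nu P r), (/ r). split; [apply Rinv_0_lt_compat; lra| split; auto].
Qed.

Lemma all_normals_V {X : Hilbert} W (P : X -> X) r : isproj W P -> convex W -> 0 < r ->
  forall NV, normal_field (Vof P r) NV -> lipschitz_on (boundary (Vof P r)) NV (/ r).
Proof.
  intros HP Hcv Hr NV Hnf.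
  assert (Heq : forall x, boundary (Vof P r) x -> NV x = nu P r x).
  { intros x Hb. assert (Hx := eq_of_bd W P r x HP Hb).
    apply (unique_normal (Vof P r) x (NV x) (nu P r x) r).
    - apply (Hnf x Hb).
    - apply (normal_V W); auto.
    - auto.
    - apply supporting; auto. apply (V_convex W); auto. apply (V_closed W); auto.
    - intros z Hz. replace (hsub x (hscal r (nu P r x))) with (P x) in Hz
        by (unfold nu; apply hext; intro; ips; field; lra).
      unfold Vof. assert (H := proj_near W P z (P x) HP (proj1 HP x)). lra. }
  intros x y Hx Hy. rewrite (Heq x Hx), (Heq y Hy).
  destruct (C11_V W P r (P x) HP Hcv (proj1 HP x) Hr) as [_ [_ L]]. apply L; auto.
Qed.

Lemma Rmult_nonneg_nonpos_le_0 a b : 0 <= a -> b <= 0 -> a * b <= 0.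
Proof. intros. nra. Qed.

Lemma get_proj {X : Hilbert} (W : X -> Prop) w0 : is_closed W -> convex W -> W w0 -> exists P, isproj W P.
Proof.
  intros Hcl Hcv Hw0.
  assert (H := proj_exists W w0 Hcl Hcv Hw0).
  exists (fun z => proj1_sig (constructive_indefinite_description _ (H z))).
  split; intro z; destruct (constructive_indefinite_description _ (H z)) as [p [Hp1 Hp2]]; simpl; auto.
Qed.

Lemma norm_le_add {X : Hilbert} (z p : X) : hnorm z <= hdist z p + hnorm p.
Proof.
  unfold hdist. replace z with (hadd (hsub z p) p) at 1 by hext_tac. apply tri.
Qed.

Lemma construct {X : Hilbert} (C : X -> Prop) (N : X -> X)
  (HN : forall x, C x -> hnorm (N x) = 1) r : 0 < r ->
  (forall x y, C x -> C y ->
        hinner (N y) (hsub y x) >= r / 2 * (hnorm (hsub (N y) (N x))) ^ 2) ->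
  exists V : X -> Prop, C11_body V /\
       (forall x, C x -> boundary V x /\ outer_unit_normal V x (N x)) /\
       (forall NV, normal_field V NV -> lipschitz_on (boundary V) NV (/ r)) /\
       (hbounded C -> hbounded V).
Proof.
  intros Hr Hin.
  destruct (classic (exists x0, C x0)) as [[x0 Hx0]|Hne].
  - set (cen := fun y => hsub y (hscal r (N y))).
    set (W := fun w => forall K : X -> Prop, is_closed K -> convex K -> (forall y, C y -> K (cen y)) -> K w).
    assert (HWc : is_closed W).
    { intros w Hw K HK HKc Hcen. apply HK. intros eps He. destruct (Hw eps He) as [y [Hy Hd]].
      exists y; split; [apply Hy; auto| auto]. }
    assert (HWv : convex W) by (intros a b t Ha Hb Ht K HK HKc Hcen; apply HKc; [apply Ha; auto| apply Hb; auto| auto]).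
    assert (HWcen : forall y, C y -> W (cen y)) by (intros y Hy K _ _ Hc; apply Hc; auto).
    destruct (get_proj W (cen x0) HWc HWv (HWcen x0 Hx0)) as [P HP].
    assert (HPx : forall x, C x -> P x = cen x).
    { intros x Hx. symmetry. apply (proj_unique W P x (cen x) HP (HWcen x Hx)).
      assert (Hnx := unit_ip _ (HN x Hx)).
      set (K := fun w => hinner (N x) (hsub w (cen x)) <= 0).
      assert (HK : is_closed K).
      { intros w Hcl. unfold K. apply Rnot_lt_le; intro Hlt.
        destruct (Hcl _ Hlt) as [y [Hy Hd]]. unfold K in Hy.
        assert (Cs := cs1 (N x) (hsub w y)). rewrite (HN x Hx) in Cs.
        fold (hdist w y) in Cs. rewrite hdist_sym in Cs.
        assert (hinner (N x) (hsub w (cen x)) = hinner (N x) (hsub y (cen x)) + hinner (N x) (hsub w y))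
          by (ips; ring). lra. }
      assert (HKc : convex K).
      { intros a b t Ha Hb Ht. unfold K in *. ipsin Ha. ipsin Hb. ips.
        assert (t * (hinner (N x) a - hinner (N x) (cen x)) <= 0) by (apply Rmult_nonneg_nonpos_le_0; lra).
        assert ((1 - t) * (hinner (N x) b - hinner (N x) (cen x)) <= 0) by (apply Rmult_nonneg_nonpos_le_0; lra).
        nra. }
      assert (HKcen : forall y, C y -> K (cen y)).
      { intros y Hy. unfold K, cen. assert (I := Hin y x Hy Hx). rewrite hnorm_sq2 in I.
        assert (Hny := unit_ip _ (HN y Hy)). ipsin I. ips.
        rewrite Hnx, Hny in *. rewrite (hinner_sym _ (N y) (N x)) in I. lra. }
      intros w Hw. assert (Kw := Hw K HK HKc HKcen). unfold K in Kw.
      replace (hsub x (cen x)) with (hscal r (N x)) by (unfold cen; hext_tac).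
      rewrite hinner_scal_l. apply Rmult_nonneg_nonpos_le_0; lra. }
    assert (Hfx : forall x, C x -> hdist x (P x) = r).
    { intros x Hx. rewrite HPx by auto. unfold hdist, cen.
      replace (hsub x (hsub x (hscal r (N x)))) with (hscal r (N x)) by hext_tac.
      rewrite norm_scal, (HN x Hx), Rabs_right; lra. }
    exists (Vof P r). destruct (C11_V W P r (cen x0) HP HWv (HWcen x0 Hx0) Hr) as [H11 _].
    split; [auto| split; [|split]].
    + intros x Hx. assert (Hb := bd_of_eq W P r x HP Hr (Hfx x Hx)). split; auto.
      replace (N x) with (nu P r x). apply (normal_V W); auto.
      unfold nu. rewrite HPx by auto. unfold cen. apply hext; intro; ips. field; lra.
    + apply (all_normals_V W); auto.
    + intros [M HM].
      set (K := fun w : X => hnorm w <= M + r).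
      assert (HK : is_closed K).
      { intros w Hcl. unfold K. apply Rnot_lt_le; intro Hlt.
        destruct (Hcl (hnorm w - (M + r)) ltac:(lra)) as [y [Hy Hd]]. unfold K in Hy.
        assert (T := norm_le_add w y). rewrite hdist_sym in Hd. lra. }
      assert (HKc : convex K).
      { intros a b t Ha Hb Ht. unfold K in *. eapply Rle_trans; [apply tri|].
        rewrite !norm_scal, Rabs_right, (Rabs_right (1 - t)) by lra.
        assert (t * hnorm a <= t * (M + r)) by (apply Rmult_le_compat_l; lra).
        assert ((1 - t) * hnorm b <= (1 - t) * (M + r)) by (apply Rmult_le_compat_l; lra). lra. }
      assert (HKcen : forall y, C y -> K (cen y)).
      { intros y Hy. unfold K, cen, hsub. eapply Rle_trans; [apply tri|].
        rewrite norm_opp, norm_scal, HN, Rabs_right by (auto; lra). assert (H := HM y Hy). lra. }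
      exists (M + r + r). intros z Hz. unfold Vof in Hz.
      assert (T := norm_le_add z (P z)). assert (KP := proj1 HP z K HK HKc HKcen). unfold K in KP. lra.
  - set (W := fun w : X => w = hzero).
    assert (HWc : is_closed W).
    { intros w Hcl. unfold W. apply norm_zero_eq. apply NNPP; intro Hn.
      assert (Hpos : 0 < hnorm w) by (destruct (hnorm_nonneg w); auto; congruence).
      destruct (Hcl _ Hpos) as [y [Hy Hd]]. unfold W in Hy. subst y.
      unfold hdist in Hd. replace (hsub hzero w) with (hopp w) in Hd by hext_tac.
      rewrite norm_opp in Hd. lra. }
    assert (HWv : convex W) by (intros a b t Ha Hb Ht; unfold W in *; subst; hext_tac).
    destruct (get_proj W hzero HWc HWv eq_refl) as [P HP].
    exists (Vof P r). destruct (C11_V W P r hzero HP HWv eq_refl Hr) as [H11 _].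
    split; [auto| split; [|split]].
    + intros x Hx. exfalso; apply Hne; exists x; auto.
    + apply (all_normals_V W); auto.
    + intros _. exists r. intros z Hz. unfold Vof in Hz.
      assert (T := norm_le_add z (P z)). assert (KP := proj1 HP z). unfold W in KP.
      rewrite KP in T. assert (Z0 : hnorm (@hzero X) = 0) by (unfold hnorm; rewrite ip_zerol; apply sqrt_0). rewrite KP in Hz. lra.
Qed.

Theorem theorem1p3 (X : Hilbert) (C : X -> Prop) (N : X -> X)
  (HN : forall x, C x -> hnorm (N x) = 1) :
  ((exists V : X -> Prop, C11_body V /\
      (forall x, C x -> boundary V x /\ outer_unit_normal V x (N x)))
   <->
   (exists r, 0 < r /\ forall x y, C x -> C y ->
      hinner (N y) (hsub y x) >= r / 2 * (hnorm (hsub (N y) (N x))) ^ 2))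
  /\
  (forall r, 0 < r ->
     (forall x y, C x -> C y ->
        hinner (N y) (hsub y x) >= r / 2 * (hnorm (hsub (N y) (N x))) ^ 2) ->
     exists V : X -> Prop, C11_body V /\
       (forall x, C x -> boundary V x /\ outer_unit_normal V x (N x)) /\
       (forall NV, normal_field V NV -> lipschitz_on (boundary V) NV (/ r)) /\
       (hbounded C -> hbounded V)).
Proof.
  split; [split|].
  - apply dir12.
  - intros [r [Hr Hin]]. destruct (construct C N HN r Hr Hin) as [V [A [B _]]]. exists V; auto.
  - intros r Hr Hin. apply construct; auto.
Qed.
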